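(* Let $\beta>\alpha>0$ and let $q=(q_1,q_2,q_3,q_4)\in(\mathbb{R}^2)^4$ be a convex non-collinear central configuration of the planar Newtonian 4-body problem with masses $m_1=m_2=\beta$, $m_3=m_4=\alpha$, the vertices being labelled so that $q_1,q_2,q_3,q_4$ is the cyclic order around the convex quadrilateral (so the equal masses occupy adjacent vertices). If $r_{13}=r_{24}$, then the configuration is symmetric and forms an isosceles trapezoid: the side $q_1q_2$ is parallel to the side $q_3q_4$, and $r_{14}=r_{23}$.
   Context: Bodies have positions $q_i\in\mathbb{R}^2$ and masses $m_i>0$, $i=1,\dots,4$; $r_{ij}=\|q_i-q_j\|$. The Newtonian potential is $U(q)=\sum_{i<j}m_im_j/r_{ij}$ (gravitational constant $1$). A configuration $q$ with $q_i\neq q_j$ for all $i\neq j$ and center of mass $\sum_i m_iq_i=0$ is a central configuration if there is a constant $\lambda$ with $\frac{1}{m_i}\frac{\partial U}{\partial q_i}=\lambda q_i$ for all $i$, i.e. $\sum_{j\neq i} m_j\frac{q_j-q_i}{r_{ij}^3}=\lambda q_i$. ''Convex non-collinear'' means the four points are the vertices of a strictly convex quadrilateral (no three of them collinear). *)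

(* Defs.v *)
From Stdlib Require Import Reals.
Open Scope R_scope.

Definition pt := (R * R)%type.

Definition rdist (p q : pt) : R :=
  sqrt ((fst p - fst q)^2 + (snd p - snd q)^2).

(* Orientation (twice the signed area) of the triangle (a,b,c). *)
Definition orient (a b c : pt) : R :=
  (fst b - fst a) * (snd c - snd a) - (snd b - snd a) * (fst c - fst a).

(* Planar 4-body configuration: positions q : nat -> pt used at indices 1..4,
   masses m : nat -> R at 1..4. *)
Definition idx4 (i : nat) : Prop := (1 <= i <= 4)%nat.

Definition force_x (m : nat -> R) (q : nat -> pt) (i j : nat) : R :=
  if Nat.eqb i j then 0
  else m j * (fst (q j) - fst (q i)) / (rdist (q i) (q j))^3.
Definition force_y (m : nat -> R) (q : nat -> pt) (i j : nat) : R :=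
  if Nat.eqb i j then 0
  else m j * (snd (q j) - snd (q i)) / (rdist (q i) (q j))^3.

Definition central_configuration4 (m : nat -> R) (q : nat -> pt) : Prop :=
  (forall i j, idx4 i -> idx4 j -> i <> j -> q i <> q j) /\
  m 1%nat * fst (q 1%nat) + m 2%nat * fst (q 2%nat)
    + m 3%nat * fst (q 3%nat) + m 4%nat * fst (q 4%nat) = 0 /\
  m 1%nat * snd (q 1%nat) + m 2%nat * snd (q 2%nat)
    + m 3%nat * snd (q 3%nat) + m 4%nat * snd (q 4%nat) = 0 /\
  exists lambda : R, forall i, idx4 i ->
    force_x m q i 1 + force_x m q i 2 + force_x m q i 3 + force_x m q i 4
      = lambda * fst (q i) /\
    force_y m q i 1 + force_y m q i 2 + force_y m q i 3 + force_y m q i 4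
      = lambda * snd (q i).

(* q1,q2,q3,q4 are, in this cyclic order, the vertices of a strictly convex
   quadrilateral (no three collinear): all consecutive turns have the same
   strict sign. *)
Definition strictly_convex_cyclic (a b c d : pt) : Prop :=
  (0 < orient a b c /\ 0 < orient b c d /\ 0 < orient c d a /\ 0 < orient d a b) \/
  (orient a b c < 0 /\ orient b c d < 0 /\ orient c d a < 0 /\ orient d a b < 0).

Definition parallel (a b c d : pt) : Prop :=
  (fst b - fst a) * (snd d - snd c) - (snd b - snd a) * (fst d - fst c) = 0.

(* Main.v *)
Require Import Defs.
From Stdlib Require Import Reals Lra Lia.
Open Scope R_scope.

Lemma rdist_sym p q : rdist p q = rdist q p.
Proof. unfold rdist; f_equal; ring. Qed.

Lemma rdist_pos p q : p <> q -> 0 < rdist p q.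
Proof.
  destruct p as [a b], q as [c d]; intro H; unfold rdist; simpl.
  apply sqrt_lt_R0.
  pose proof (Rle_0_sqr (b-d)); pose proof (Rle_0_sqr (a-c)).
  destruct (Req_dec a c) as [Hac|Hac].
  - destruct (Req_dec b d) as [Hbd|Hbd]; [exfalso; apply H; subst; reflexivity|].
    assert (0 < (b-d)²) by (apply Rsqr_pos_lt; lra). unfold Rsqr in *. nra.
  - assert (0 < (a-c)²) by (apply Rsqr_pos_lt; lra). unfold Rsqr in *. nra.
Qed.

Lemma rdist_sq p q : rdist p q ^ 2 = (fst p - fst q)^2 + (snd p - snd q)^2.
Proof. unfold rdist; apply pow2_sqrt; apply Rplus_le_le_0_compat; apply pow2_ge_0. Qed.

Lemma cube_inj a b : 0 < a -> 0 < b -> a^3 = b^3 -> a = b.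
Proof.
  intros Ha Hb H.
  assert (E : (a-b)*(a*a+a*b+b*b) = 0) by (replace ((a-b)*(a*a+a*b+b*b)) with (a^3-b^3) by ring; lra).
  apply Rmult_integral in E; destruct E as [E|E]; nra.
Qed.

Lemma inv_cube_inj a b : 0 < a -> 0 < b -> / a^3 = / b^3 -> a = b.
Proof. intros Ha Hb H; apply Rinv_eq_reg in H; apply cube_inj; auto. Qed.

Lemma cross xi yi xa ya xb yb xc yc ca cb cc :
  ca*(xa-xi) + cb*(xb-xi) + cc*(xc-xi) = 0 ->
  ca*(ya-yi) + cb*(yb-yi) + cc*(yc-yi) = 0 ->
  ca*((xa-xi)*(yc-yi) - (ya-yi)*(xc-xi)) + cb*((xb-xi)*(yc-yi) - (yb-yi)*(xc-xi)) = 0.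
Proof.
  intros H1 H2.
  replace (ca*((xa-xi)*(yc-yi) - (ya-yi)*(xc-xi)) + cb*((xb-xi)*(yc-yi) - (yb-yi)*(xc-xi)))
    with ((ca*(xa-xi) + cb*(xb-xi) + cc*(xc-xi))*(yc-yi) - (ca*(ya-yi) + cb*(yb-yi) + cc*(yc-yi))*(xc-xi)) by ring.
  rewrite H1, H2; ring.
Qed.

Lemma gram ax ay bx bY cx cy D : 0 < D ->
  ax^2+ay^2 = D -> bx^2+bY^2 = D -> cx^2+cy^2 = D ->
  (ax-bx)^2+(ay-bY)^2 = D -> (ax-cx)^2+(ay-cy)^2 = D -> (bx-cx)^2+(bY-cy)^2 = D -> False.
Proof.
  intros HD Ha Hb Hc Hab Hac Hbc.
  assert (G : (ax*ax+ay*ay)*((bx*bx+bY*bY)*(cx*cx+cy*cy) - (bx*cx+bY*cy)*(bx*cx+bY*cy))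
    - (ax*bx+ay*bY)*((ax*bx+ay*bY)*(cx*cx+cy*cy) - (bx*cx+bY*cy)*(ax*cx+ay*cy))
    + (ax*cx+ay*cy)*((ax*bx+ay*bY)*(bx*cx+bY*cy) - (bx*bx+bY*bY)*(ax*cx+ay*cy)) = 0) by ring.
  assert (E1 : ax*ax+ay*ay = D) by lra.
  assert (E2 : bx*bx+bY*bY = D) by lra.
  assert (E3 : cx*cx+cy*cy = D) by lra.
  assert (E4 : ax*bx+ay*bY = D/2) by lra.
  assert (E5 : ax*cx+ay*cy = D/2) by lra.
  assert (E6 : bx*cx+bY*cy = D/2) by lra.
  rewrite E1, E2, E3, E4, E5, E6 in G.
  assert (0 < D^3) by (apply pow_lt; auto).
  nra.
Qed.

Lemma geo x1 y1 x2 y2 x3 y3 x4 y4 :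
  (x3-x2)*(y4-y1) - (y3-y2)*(x4-x1) = 0 ->
  (x1-x3)^2+(y1-y3)^2 = (x2-x4)^2+(y2-y4)^2 ->
  0 < orient (x2,y2) (x3,y3) (x4,y4) * orient (x4,y4) (x1,y1) (x2,y2) ->
  (x1-x2)^2+(y1-y2)^2 = (x3-x4)^2+(y3-y4)^2.
Proof.
  unfold orient; simpl.
  set (ex := x3-x2); set (ey := y3-y2); set (fx := x4-x1); set (fy := y4-y1).
  set (wx := x1+x4-x2-x3); set (wy := y1+y4-y2-y3).
  intros Hc H13 Hor.
  assert (L1 : (x1-x2)^2+(y1-y2)^2 - ((x3-x4)^2+(y3-y4)^2) = 2*(ex*wx+ey*wy)).
  { unfold ex, ey, wx, wy. lra. }
  assert (L2 : fx*wx+fy*wy = -(ex*wx+ey*wy)).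
  { unfold ex, ey, fx, fy, wx, wy. lra. }
  assert (I1 : (ex*ex+ey*ey)*(fx*wx+fy*wy) - (ex*fx+ey*fy)*(ex*wx+ey*wy) = (ex*fy-ey*fx)*(ex*wy-ey*wx)) by ring.
  assert (I2 : (fx*fx+fy*fy)*(ex*wx+ey*wy) - (ex*fx+ey*fy)*(fx*wx+fy*wy) = (fx*ey-fy*ex)*(fx*wy-fy*wx)) by ring.
  assert (Hc' : ex*fy - ey*fx = 0) by (unfold ex, ey, fx, fy in *; lra).
  replace (fx*ey-fy*ex) with (-(ex*fy-ey*fx)) in I2 by ring.
  rewrite Hc' in I1, I2. rewrite L2 in I1, I2.
  set (c := ex*wx+ey*wy) in *.
  assert (K : c*((ex+fx)^2+(ey+fy)^2) = 0) by nra.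
  apply Rmult_integral in K; destruct K as [K|K]; [lra|].
  pose proof (pow2_ge_0 (ex+fx)); pose proof (pow2_ge_0 (ey+fy)).
  assert (Q1 : (ex+fx)^2 = 0) by lra. assert (Q2 : (ey+fy)^2 = 0) by lra.
  assert (ex+fx = 0) by (apply Rsqr_eq_0; unfold Rsqr; lra).
  assert (ey+fy = 0) by (apply Rsqr_eq_0; unfold Rsqr; lra).
  unfold ex, fx, ey, fy in *.
  replace x3 with (x2-x4+x1) in Hor by lra.
  replace y3 with (y2-y4+y1) in Hor by lra.
  assert (HH : 0 < -(((x1-x4)*(y4-y2) - (y1-y4)*(x4-x2))*((x1-x4)*(y4-y2) - (y1-y4)*(x4-x2)))).
  { eapply Rlt_le_trans; [exact Hor| right; ring]. }
  pose proof (Rle_0_sqr ((x1-x4)*(y4-y2) - (y1-y4)*(x4-x2))). unfold Rsqr in *. lra.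
Qed.
Lemma core (a b D1 D2 D3 D4 S12 S13 S14 S23 S24 S34 : R) :
  0 < a -> a < b -> D1 <> 0 -> D2 <> 0 -> D3 <> 0 -> D4 <> 0 ->
  D1 + D2 + D3 + D4 = 0 -> S24 = S13 -> S13 <> 0 ->
  b*S12*D3 = a*S13*D2 ->
  b*S12*D4 = a*S24*D1 ->
  a*S13*D4 = a*S14*D3 ->
  a*S23*D4 = a*S24*D3 ->
  b*S13*D4 = a*S34*D1 ->
  (D1 + D4 = 0 -> S12 = S34) ->
  D1 + D2 = 0 /\ S14 = S23.
Proof.
  intros Ha Hab H1 H2 H3 H4 HS HT HT0 R1 R2 R3 R4 R5 Hg.
  rewrite HT in *.
  assert (E1 : b*S12*D3*D4 = a*S13*D2*D4) by (rewrite R1; ring).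
  assert (E2 : b*S12*D4*D3 = a*S13*D1*D3) by (rewrite R2; ring).
  assert (E : (a*S13)*(D2*D4 - D1*D3) = 0) by lra.
  apply Rmult_integral in E; destruct E as [E|E].
  { exfalso. apply Rmult_integral in E; destruct E; [lra|auto]. }
  assert (F : (D1+D2)*(D1+D4) = 0).
  { replace ((D1+D2)*(D1+D4)) with (D1*(D1+D2+D3+D4) + (D2*D4 - D1*D3)) by ring.
    rewrite HS, E; ring. }
  apply Rmult_integral in F; destruct F as [F|F].
  - split; [exact F|].
    assert (G1 : (a*D3)*(S14 + S13) = 0).
    { replace D4 with (-D3) in R3 by lra. lra. }
    assert (G2 : (a*D3)*(S23 + S13) = 0).
    { replace D4 with (-D3) in R4 by lra. lra. }
    assert (a*D3 <> 0) by (apply Rmult_integral_contrapositive; split; lra).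
    apply Rmult_integral in G1; destruct G1; [contradiction|].
    apply Rmult_integral in G2; destruct G2; [contradiction|]. lra.
  - exfalso. specialize (Hg F).
    assert (G1 : D3*(b*S12 + a*S13) = 0).
    { replace D2 with (-D3) in R1 by lra. lra. }
    assert (G2 : D1*(b*S13 + a*S34) = 0).
    { replace D4 with (-D1) in R5 by lra. lra. }
    apply Rmult_integral in G1; destruct G1 as [G1|G1]; [contradiction|].
    apply Rmult_integral in G2; destruct G2 as [G2|G2]; [contradiction|].
    rewrite <- Hg in G2.
    assert (K : (b*b - a*a)*S13 = 0).
    { replace ((b*b - a*a)*S13) with (b*(a*S12+b*S13) - a*(b*S12+a*S13)) by ring.
      rewrite G1. replace (a*S12+b*S13) with (b*S13+a*S12) by ring. rewrite G2. ring. }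
    apply Rmult_integral in K; destruct K; [nra|contradiction].
Qed.

Theorem theorem1p1 (alpha beta : R) (m : nat -> R) (q : nat -> pt) :
  0 < alpha -> alpha < beta ->
  m 1%nat = beta -> m 2%nat = beta -> m 3%nat = alpha -> m 4%nat = alpha ->
  central_configuration4 m q ->
  strictly_convex_cyclic (q 1%nat) (q 2%nat) (q 3%nat) (q 4%nat) ->
  rdist (q 1%nat) (q 3%nat) = rdist (q 2%nat) (q 4%nat) ->
  parallel (q 1%nat) (q 2%nat) (q 3%nat) (q 4%nat) /\
  rdist (q 1%nat) (q 4%nat) = rdist (q 2%nat) (q 3%nat).
Proof.
  intros Ha Hab Hm1 Hm2 Hm3 Hm4 [Hd [Hcx [Hcy [lam Hlam]]]] Hconv H13.
  assert (I1 : idx4 1) by (unfold idx4; lia).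
  assert (I2 : idx4 2) by (unfold idx4; lia).
  assert (I3 : idx4 3) by (unfold idx4; lia).
  assert (I4 : idx4 4) by (unfold idx4; lia).
  destruct (Hlam 1%nat I1) as [F1x F1y].
  destruct (Hlam 2%nat I2) as [F2x F2y].
  destruct (Hlam 3%nat I3) as [F3x F3y].
  destruct (Hlam 4%nat I4) as [F4x F4y].
  assert (P12 : 0 < rdist (q 1%nat) (q 2%nat)) by (apply rdist_pos, Hd; auto).
  assert (P13 : 0 < rdist (q 1%nat) (q 3%nat)) by (apply rdist_pos, Hd; auto).
  assert (P14 : 0 < rdist (q 1%nat) (q 4%nat)) by (apply rdist_pos, Hd; auto).
  assert (P23 : 0 < rdist (q 2%nat) (q 3%nat)) by (apply rdist_pos, Hd; auto).
  assert (P24 : 0 < rdist (q 2%nat) (q 4%nat)) by (apply rdist_pos, Hd; auto).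
  assert (P34 : 0 < rdist (q 3%nat) (q 4%nat)) by (apply rdist_pos, Hd; auto).
  clear Hlam; unfold force_x, force_y in *; cbn [Nat.eqb] in F1x, F1y, F2x, F2y, F3x, F3y, F4x, F4y.
  rewrite (rdist_sym (q 2%nat) (q 1%nat)), (rdist_sym (q 3%nat) (q 1%nat)),
    (rdist_sym (q 4%nat) (q 1%nat)), (rdist_sym (q 3%nat) (q 2%nat)),
    (rdist_sym (q 4%nat) (q 2%nat)), (rdist_sym (q 4%nat) (q 3%nat)) in *.
  rewrite Hm1, Hm2, Hm3, Hm4 in *.
  set (k := lam / (2*alpha + 2*beta)).
  assert (Hk : lam = k * (2*alpha+2*beta)) by (unfold k; field; lra).
  rewrite Hk in *. clearbody k.
  set (r12 := rdist (q 1%nat) (q 2%nat)) in *.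
  set (r13 := rdist (q 1%nat) (q 3%nat)) in *.
  set (r14 := rdist (q 1%nat) (q 4%nat)) in *.
  set (r23 := rdist (q 2%nat) (q 3%nat)) in *.
  set (r24 := rdist (q 2%nat) (q 4%nat)) in *.
  set (r34 := rdist (q 3%nat) (q 4%nat)) in *.
  set (x1 := fst (q 1%nat)) in *. set (y1 := snd (q 1%nat)) in *.
  set (x2 := fst (q 2%nat)) in *. set (y2 := snd (q 2%nat)) in *.
  set (x3 := fst (q 3%nat)) in *. set (y3 := snd (q 3%nat)) in *.
  set (x4 := fst (q 4%nat)) in *. set (y4 := snd (q 4%nat)) in *.
  unfold Rdiv in *.
  assert (Kx : k*(beta*x1+beta*x2+alpha*x3+alpha*x4) = 0) by (rewrite Hcx; ring).
  assert (Ky : k*(beta*y1+beta*y2+alpha*y3+alpha*y4) = 0) by (rewrite Hcy; ring).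
  set (S12 := / r12^3 + k). set (S13 := / r13^3 + k). set (S14 := / r14^3 + k).
  set (S23 := / r23^3 + k). set (S24 := / r24^3 + k). set (S34 := / r34^3 + k).
  assert (W1x : beta*S12*(x2-x1) + alpha*S13*(x3-x1) + alpha*S14*(x4-x1) = 0) by (unfold S12, S13, S14; lra).
  assert (W1y : beta*S12*(y2-y1) + alpha*S13*(y3-y1) + alpha*S14*(y4-y1) = 0) by (unfold S12, S13, S14; lra).
  assert (W2x : beta*S12*(x1-x2) + alpha*S23*(x3-x2) + alpha*S24*(x4-x2) = 0) by (unfold S12, S23, S24; lra).
  assert (W2y : beta*S12*(y1-y2) + alpha*S23*(y3-y2) + alpha*S24*(y4-y2) = 0) by (unfold S12, S23, S24; lra).
  assert (W3x : beta*S13*(x1-x3) + beta*S23*(x2-x3) + alpha*S34*(x4-x3) = 0) by (unfold S13, S23, S34; lra).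
  assert (W3y : beta*S13*(y1-y3) + beta*S23*(y2-y3) + alpha*S34*(y4-y3) = 0) by (unfold S13, S23, S34; lra).
  assert (ES12 : S12 = / r12^3 + k) by reflexivity.
  assert (ES13 : S13 = / r13^3 + k) by reflexivity.
  assert (ES14 : S14 = / r14^3 + k) by reflexivity.
  assert (ES23 : S23 = / r23^3 + k) by reflexivity.
  assert (ES24 : S24 = / r24^3 + k) by reflexivity.
  assert (ES34 : S34 = / r34^3 + k) by reflexivity.
  clearbody S12 S13 S14 S23 S24 S34.
  assert (Q12 : r12^2 = (x1-x2)^2+(y1-y2)^2) by apply rdist_sq.
  assert (Q13 : r13^2 = (x1-x3)^2+(y1-y3)^2) by apply rdist_sq.
  assert (Q14 : r14^2 = (x1-x4)^2+(y1-y4)^2) by apply rdist_sq.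
  assert (Q23 : r23^2 = (x2-x3)^2+(y2-y3)^2) by apply rdist_sq.
  assert (Q24 : r24^2 = (x2-x4)^2+(y2-y4)^2) by apply rdist_sq.
  assert (Q34 : r34^2 = (x3-x4)^2+(y3-y4)^2) by apply rdist_sq.
  unfold strictly_convex_cyclic, orient in Hconv.
  change (fst (q 1%nat)) with x1 in Hconv. change (fst (q 2%nat)) with x2 in Hconv.
  change (fst (q 3%nat)) with x3 in Hconv. change (fst (q 4%nat)) with x4 in Hconv.
  change (snd (q 1%nat)) with y1 in Hconv. change (snd (q 2%nat)) with y2 in Hconv.
  change (snd (q 3%nat)) with y3 in Hconv. change (snd (q 4%nat)) with y4 in Hconv.
  unfold parallel. change (fst (q 1%nat)) with x1. change (fst (q 2%nat)) with x2.
  change (fst (q 3%nat)) with x3. change (fst (q 4%nat)) with x4.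
  change (snd (q 1%nat)) with y1. change (snd (q 2%nat)) with y2.
  change (snd (q 3%nat)) with y3. change (snd (q 4%nat)) with y4.
  clearbody x1 x2 x3 x4 y1 y2 y3 y4 r12 r13 r14 r23 r24 r34.
  set (D1 := (x3-x2)*(y4-y2) - (y3-y2)*(x4-x2)).
  set (D2 := -((x3-x1)*(y4-y1) - (y3-y1)*(x4-x1))).
  set (D3 := (x2-x1)*(y4-y1) - (y2-y1)*(x4-x1)).
  set (D4 := -((x2-x1)*(y3-y1) - (y2-y1)*(x3-x1))).
  pose proof (cross x1 y1 x2 y2 x3 y3 x4 y4 (beta*S12) (alpha*S13) (alpha*S14) ltac:(lra) ltac:(lra)) as C1.
  pose proof (cross x2 y2 x1 y1 x4 y4 x3 y3 (beta*S12) (alpha*S24) (alpha*S23) ltac:(lra) ltac:(lra)) as C2.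
  pose proof (cross x1 y1 x3 y3 x4 y4 x2 y2 (alpha*S13) (alpha*S14) (beta*S12) ltac:(lra) ltac:(lra)) as C3.
  pose proof (cross x2 y2 x3 y3 x4 y4 x1 y1 (alpha*S23) (alpha*S24) (beta*S12) ltac:(lra) ltac:(lra)) as C4.
  pose proof (cross x3 y3 x1 y1 x4 y4 x2 y2 (beta*S13) (alpha*S34) (beta*S23) ltac:(lra) ltac:(lra)) as C5.
  assert (R1 : beta*S12*D3 = alpha*S13*D2) by (unfold D2, D3; lra).
  assert (R2 : beta*S12*D4 = alpha*S24*D1) by (unfold D1, D4; lra).
  assert (R3 : alpha*S13*D4 = alpha*S14*D3) by (unfold D3, D4; lra).
  assert (R4 : alpha*S23*D4 = alpha*S24*D3) by (unfold D3, D4; lra).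
  assert (R5 : beta*S13*D4 = alpha*S34*D1) by (unfold D1, D4; lra).
  assert (HDs : (0 < D1 /\ D2 < 0 /\ 0 < D3 /\ D4 < 0) \/ (D1 < 0 /\ 0 < D2 /\ D3 < 0 /\ 0 < D4)).
  { unfold D1, D2, D3, D4; destruct Hconv as [[? [? [? ?]]]|[? [? [? ?]]]]; [left|right]; lra. }
  assert (HD1 : D1 <> 0) by (destruct HDs; lra).
  assert (HD2 : D2 <> 0) by (destruct HDs; lra).
  assert (HD3 : D3 <> 0) by (destruct HDs; lra).
  assert (HD4 : D4 <> 0) by (destruct HDs; lra).
  assert (HS : D1 + D2 + D3 + D4 = 0) by (unfold D1, D2, D3, D4; ring).
  assert (HT : S24 = S13) by (rewrite ES24, ES13, H13; reflexivity).
  assert (HT0 : S13 <> 0).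
  { intro T0.
    assert (Z12 : S12 = 0).
    { rewrite T0 in R1. assert (beta*D3*S12 = 0) by lra.
      apply Rmult_integral in H; destruct H as [H|H]; [|exact H].
      apply Rmult_integral in H; destruct H; [lra|contradiction]. }
    assert (Z14 : S14 = 0).
    { rewrite T0 in R3. assert (alpha*D3*S14 = 0) by lra.
      apply Rmult_integral in H; destruct H as [H|H]; [|exact H].
      apply Rmult_integral in H; destruct H; [lra|contradiction]. }
    assert (Z23 : S23 = 0).
    { rewrite HT, T0 in R4. assert (alpha*D4*S23 = 0) by lra.
      apply Rmult_integral in H; destruct H as [H|H]; [|exact H].
      apply Rmult_integral in H; destruct H; [lra|contradiction]. }
    assert (Z34 : S34 = 0).
    { rewrite T0 in R5. assert (alpha*D1*S34 = 0) by lra.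
      apply Rmult_integral in H; destruct H as [H|H]; [|exact H].
      apply Rmult_integral in H; destruct H; [lra|contradiction]. }
    assert (e13 : r13 = r12) by (apply inv_cube_inj; auto; lra).
    assert (e14 : r14 = r12) by (apply inv_cube_inj; auto; lra).
    assert (e23 : r23 = r12) by (apply inv_cube_inj; auto; lra).
    assert (e24 : r24 = r12) by (apply inv_cube_inj; auto; lra).
    assert (e34 : r34 = r12) by (apply inv_cube_inj; auto; lra).
    rewrite e13 in Q13. rewrite e14 in Q14. rewrite e23 in Q23.
    rewrite e24 in Q24. rewrite e34 in Q34.
    assert (0 < r12^2) by (apply pow_lt; auto).
    apply (gram (x2-x1) (y2-y1) (x3-x1) (y3-y1) (x4-x1) (y4-y1) (r12^2)); auto; lra. }
  assert (Hg : D1 + D4 = 0 -> S12 = S34).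
  { intro F.
    assert (G : (x1-x2)^2+(y1-y2)^2 = (x3-x4)^2+(y3-y4)^2).
    { apply geo.
      - unfold D1, D4 in F; lra.
      - rewrite <- Q13, <- Q24, H13; reflexivity.
      - unfold orient; simpl. destruct Hconv as [[A1 [A2 [A3 A4]]]|[A1 [A2 [A3 A4]]]].
        + apply Rmult_lt_0_compat; lra.
        + set (u := (x3 - x2) * (y4 - y2) - (y3 - y2) * (x4 - x2)) in *.
          set (v := (x1 - x4) * (y2 - y4) - (y1 - y4) * (x2 - x4)) in *.
          replace (u*v) with ((-u)*(-v)) by ring. apply Rmult_lt_0_compat; lra. }
    assert (E2 : (r12 - r34)*(r12+r34) = 0) by (replace ((r12 - r34)*(r12+r34)) with (r12^2 - r34^2) by ring; lra).
    assert (r12 = r34) by (apply Rmult_integral in E2; destruct E2; lra).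
    rewrite ES12, ES34, H; reflexivity. }
  destruct (core alpha beta D1 D2 D3 D4 S12 S13 S14 S23 S24 S34 Ha Hab HD1 HD2 HD3 HD4
     HS HT HT0 R1 R2 R3 R4 R5 Hg) as [F1 F2].
  split.
  - unfold D1, D2 in F1; lra.
  - apply inv_cube_inj; auto. lra.
Qed.
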